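(* A Burling graph contains no triangle.
   Context: Graphs are finite, without loops or multiple edges. In a rooted tree $T$ with root $r$, each non-root vertex $v$ has a parent $p(v)$; children, leaves, ancestors and descendants are as usual. A branch is a sequence $v_1\dots v_k$ ($k\ge0$) with $v_i$ the parent of $v_{i+1}$; it starts at $v_1$. A Burling tree is a 4-tuple $(T,r,\ell,c)$: $T$ a rooted tree with root $r$; $\ell$ assigns to each non-leaf vertex $v$ one of its children $\ell(v)$ (the last-born of $v$); $c$ assigns to every vertex $v$ that is neither the root nor a last-born the vertex-set of a (possibly empty) branch starting at $\ell(p(v))$, and $c(v)=\emptyset$ if $v$ is the root or a last-born. The oriented graph fully derived from it has vertex-set $V(T)$ and an arc $uv$ iff $v\in c(u)$. A (non-oriented) graph is a Burling graph if it is isomorphic to an induced subgraph of the underlying graph of the oriented graph fully derived from some Burling tree. A triangle is a set of three pairwise adjacent vertices. *)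

(* Defs.v *)
From mathcomp Require Import all_boot.
Set Implicit Arguments. Unset Strict Implicit. Unset Printing Implicit Defensive.

(* A rooted tree on a finite vertex type V with root r is given by a parent
   map p : V -> V; by convention p r = r, and every vertex reaches the root
   by iterating p (this forces acyclicity). *)
Definition rooted_tree (V : finType) (r : V) (p : V -> V) : Prop :=
  p r = r /\ forall v : V, exists k, iter k p v = r.

Definition is_child (V : finType) (r : V) (p : V -> V) (x y : V) : bool :=
  (y != r) && (p y == x).

Definition branch_set_from (V : finType) (r : V) (p : V -> V) (a : V)
    (B : {set V}) : Prop :=
  B = set0 \/
  exists s : seq V, path (is_child r p) a s /\ B = [set x in a :: s].

Definition burling_tree (V : finType) (r : V) (p : V -> V) (l : V -> V)
    (c : V -> {set V}) : Prop :=
  rooted_tree r p /\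
  (forall v : V, (exists u, is_child r p v u) -> is_child r p v (l v)) /\
  (forall v : V,
     if (v == r) || (l (p v) == v) then c v = set0
     else branch_set_from r p (l (p v)) (c v)).

(* Underlying (non-oriented) adjacency of the oriented graph fully derived
   from a Burling tree: arc uv iff v \in c u. *)
Definition derived_adj (V : finType) (c : V -> {set V}) (u v : V) : bool :=
  (v \in c u) || (u \in c v).

Definition burling_graph (G : finType) (e : rel G) : Prop :=
  exists (V : finType) (r : V) (p l : V -> V) (c : V -> {set V}),
    burling_tree r p l c /\
    exists f : G -> V, injective f /\
      forall x y : G, e x y = derived_adj c (f x) (f y).

Definition has_triangle (G : finType) (e : rel G) : Prop :=
  exists x y z : G, [&& e x y, e y z & e x z].

(* Main.v *)
Require Import Defs.
From mathcomp Require Import all_boot.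
From mathcomp Require Import zify.
Set Implicit Arguments. Unset Strict Implicit.

Lemma depth_ex (V : finType) (r : V) p : rooted_tree r p ->
  exists d : V -> nat, forall v, v != r -> d v = (d (p v)).+1.
Proof.
case=> pr Hex.
have Hex' : forall v, exists k, iter k p v == r.
  by move=> v; case: (Hex v) => k hk; exists k; apply/eqP.
exists (fun v => ex_minn (Hex' v)) => v vr.
case: ex_minnP => m hm hmin; case: ex_minnP => n hn hnmin.
apply/eqP; rewrite eqn_leq; apply/andP; split.
- by apply: hmin; rewrite iterSr.
- case: m hm hmin => [|m] hm hmin; first by rewrite /= in hm; rewrite hm in vr.
  by rewrite ltnS; apply: hnmin; rewrite -iterSr.
Qed.

Lemma chain_prop (V : finType) (r : V) p (d : V -> nat)
  (Hd : forall v, v != r -> d v = (d (p v)).+1) (s : seq V) : forall a,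
  path (is_child r p) a s ->
  (forall z, z \in a :: s -> d a <= d z) /\
  (forall y z, y \in a :: s -> z \in a :: s -> d y <= d z ->
     iter (d z - d y) p z = y).
Proof.
elim: s => [|b s IH] a /=.
- move=> _; split => [z|y z]; rewrite !inE => /eqP-> //.
  by move=> /eqP-> _; rewrite subnn.
- case/andP => /andP[br /eqP pb] hp.
  have db : d b = (d a).+1 by rewrite Hd // pb.
  case: (IH b hp) => IH1 IH2.
  have key : forall z, z \in b :: s -> iter (d z - d a) p z = a.
    move=> z hz; have := IH1 z hz => hz'.
    have -> : d z - d a = (d z - d b).+1 by rewrite db in hz' *; lia.
    by rewrite iterS IH2 ?mem_head.
  split.
  + move=> z; rewrite in_cons => /orP[/eqP->//|hz].
    have := IH1 z hz; rewrite db; lia.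
  + move=> y z; rewrite in_cons => /orP[/eqP->|hy]; rewrite in_cons => /orP[/eqP->|hz].
    * by rewrite subnn.
    * by move=> _; apply: key.
    * by move=> h; have := IH1 y hy; rewrite db; lia.
    * by apply: IH2.
Qed.

Lemma arc (V : finType) (r : V) p l c (d : V -> nat)
  (Hd : forall v, v != r -> d v = (d (p v)).+1) u v :
  burling_tree r p l c -> v \in c u ->
  p (l (p u)) = p u /\ exists s, [/\ u != r, l (p u) != u, d (l (p u)) = d u,
     path (is_child r p) (l (p u)) s & c u = [set x in l (p u) :: s]].
Proof.
case=> _ [H2 H3] hv.
have := H3 u.
case: ifP => [_ h|/norP[ur lu] hb]; first by rewrite h inE in hv.
have hc : is_child r p (p u) (l (p u)).
  by apply: H2; exists u; rewrite /is_child ur eqxx.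
case/andP: hc => ar /eqP pa.
case: hb => [h|[s [hs hcu]]]; first by rewrite h inE in hv.
split => //; exists s; split => //.
by rewrite Hd // pa -Hd.
Qed.

Lemma noTT (V : finType) (r : V) p l c (d : V -> nat)
  (Hd : forall v, v != r -> d v = (d (p v)).+1) u v w :
  burling_tree r p l c -> v \in c u -> w \in c u -> w \in c v -> False.
Proof.
move=> Hb hv hw hvw.
have [s1 [_ _ d1 hp1 e1]] := (arc Hd Hb hv).2.
have [s2 [_ l2 d2 hp2 e2]] := (arc Hd Hb hvw).2.
rewrite e1 !in_set in hv hw; rewrite e2 !in_set in hvw.
have [A1 B1] := chain_prop Hd hp1.
have [A2 B2] := chain_prop Hd hp2.
have dvw : d v <= d w by rewrite -d2; apply: A2.
have := B1 v w hv hw dvw.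
have := B2 _ w (mem_head _ _) hvw; rewrite d2 => /(_ dvw) ->.
by move=> h; rewrite h eqxx in l2.
Qed.

Lemma noC (V : finType) (r : V) p l c (d : V -> nat)
  (Hd : forall v, v != r -> d v = (d (p v)).+1) u v w :
  burling_tree r p l c -> v \in c u -> w \in c v -> u \in c w -> False.
Proof.
move=> Hb hv hw hu.
have pe := (arc Hd Hb hv).1.
have [s1 [_ _ d1 hp1 e1]] := (arc Hd Hb hv).2.
have [s2 [_ l2 d2 hp2 e2]] := (arc Hd Hb hw).2.
have [s3 [_ _ d3 hp3 e3]] := (arc Hd Hb hu).2.
rewrite e1 !in_set in hv; rewrite e2 !in_set in hw; rewrite e3 !in_set in hu.
have [A1 B1] := chain_prop Hd hp1.
have [A2 B2] := chain_prop Hd hp2.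
have [A3 B3] := chain_prop Hd hp3.
have h1 := A1 v hv; have h2 := A2 w hw; have h3 := A3 u hu.
rewrite d1 in h1; rewrite d2 in h2; rewrite d3 in h3.
have := B1 _ v (mem_head _ _) hv; rewrite d1 => /(_ h1).
have -> : d v - d u = 0 by lia.
move=> /= hvl.
move: l2; rewrite hvl pe.
by rewrite eqxx.
Qed.

Theorem lemma3p4 (G : finType) (e : rel G) :
  symmetric e -> irreflexive e -> burling_graph e -> ~ has_triangle e.
Proof.
move=> _ _ [V [r [p [l [c [Hb [f [_ He]]]]]]]] [x [y [z]]].
have [d Hd] := depth_ex Hb.1.
rewrite !He /derived_adj.
case/and3P => /orP[h1|h1] /orP[h2|h2] /orP[h3|h3].
all: first [ exact: (noTT Hd Hb h1 h3 h2) | exact: (noTT Hd Hb h3 h1 h2)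
  | exact: (noTT Hd Hb h2 h1 h3) | exact: (noTT Hd Hb h1 h2 h3)
  | exact: (noTT Hd Hb h3 h2 h1) | exact: (noTT Hd Hb h2 h3 h1)
  | exact: (noC Hd Hb h1 h2 h3) | exact: (noC Hd Hb h1 h3 h2)
  | exact: (noC Hd Hb h2 h1 h3) | exact: (noC Hd Hb h3 h2 h1)
  | exact: (noC Hd Hb h2 h3 h1) | exact: (noC Hd Hb h3 h1 h2) ].
Qed.
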